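(* Consider the scheduling policy SIS with a transmission oracle in $TO_h$ and proactive hearing control $P$. Let $v$ be a node and $p$ a packet in its queue. Then during every $h$ consecutive rounds within the time interval from the arrival of $p$ at $v$ until $p$ is transmitted from $v$, node $v$ transmits at least one packet having priority higher than that of $p$.
   Context: Multi-hop radio network model: a network is a simple graph with $n$ nodes; time is divided into synchronous rounds. Packets are injected by an adversary, each with its complete path fixed at injection. Each node keeps a single, unbounded queue of packets to be forwarded. In each round a node transmits at most one message; a node $w$ hears a message of a neighbor $u$ in a round iff $u$ is the only neighbor of $w$ transmitting in that round. When $v$ transmits a packet whose next node on its path is $w$ and $w$ hears it, the packet leaves $v$ and is absorbed at $w$ or appended to $w$'s queue. A transmission oracle tells each node in each round whether to transmit. Proactive hearing control $P$: in a round in which the oracle tells $v$ to transmit, $v$ first learns which neighbors would hear its transmission, and the scheduling policy selects a packet among the queued packets whose next node is one of these neighbors (if any), which is then transmitted and heard. A directed link $(u,w)$ is up in a round if a packet transmitted by $u$ to $w$ in that round would be heard by $w$; $TO_h$ is the class of transmission oracles under which every link is up at least once in every $h$ consecutive rounds. Scheduling policy SIS (Shortest-In-System) gives priority to the packet that has been in the system for the shortest time, ties broken arbitrarily at each round; ''packet $p$ has priority over $q$'' means the policy prefers $p$ to $q$. *)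

(* Defs.v *)
From mathcomp Require Import all_boot.
Set Implicit Arguments. Unset Strict Implicit. Unset Printing Implicit Defensive.

Section Radio.
Variables (V : finType) (adj : rel V).

Definition simple_graph := symmetric adj /\ irreflexive adj.

(* transmission oracle: in round t, node u is told to transmit iff [oracle t u] *)
Definition oracle_t := nat -> V -> bool.

Definition link_up (oracle : oracle_t) (t : nat) (u w : V) : bool :=
  [&& adj u w, oracle t u &
      [forall u', (oracle t u' && adj u' w) ==> (u' == u)]].

Definition TO (h : nat) (oracle : oracle_t) : Prop :=
  forall (u w : V) (t : nat), adj u w -> exists2 s, t <= s < t + h & link_up oracle s u w.

Variable (P : eqType) (inj : P -> nat) (pth : P -> seq V).

Definition valid_paths : Prop :=
  forall p, exists x s, pth p = x :: s /\ path adj x s.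

(* [loc t p = Some i]: at the beginning of round t, packet p is in the system
   and located at the i-th node of its path (if i is the last index, p has been
   absorbed at its destination).  [loc t p = None]: not yet injected. *)

Definition queued (loc : nat -> P -> option nat) (t : nat) (v : V) (p : P) (i : nat) : Prop :=
  [/\ loc t p = Some i, i.+1 < size (pth p) & nth v (pth p) i = v].

Definition next_node (v : V) (p : P) (i : nat) : V := nth v (pth p) i.+1.

(* A valid execution under oracle [oracle], proactive hearing control P and
   scheduling policy SIS.  [sent t v = Some p] iff v transmits packet p in round t
   (and it is then heard by the next node of p). *)
Definition SIS_P_execution (oracle : oracle_t) (loc : nat -> P -> option nat)
    (sent : nat -> V -> option P) : Prop :=
  (forall p t, t < inj p -> loc t p = None) /\
  (forall p, loc (inj p) p = Some 0) /\
  (forall p t i, loc t p = Some i ->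
     loc t.+1 p = if [exists u, sent t u == Some p] then Some i.+1 else Some i) /\
  (* proactive hearing control: only transmit when told, a queued packet whose
     next node hears the transmission *)
  (forall t v p, sent t v = Some p ->
     oracle t v /\ exists i, queued loc t v p i /\ link_up oracle t v (next_node v p i)) /\
  (* if told to transmit and some eligible packet exists, the policy selects one;
     SIS: the selected packet has been in the system the shortest time, i.e. has
     the latest injection round among eligible packets (ties arbitrary) *)
  (forall t v, oracle t v ->
     (exists p i, queued loc t v p i /\ link_up oracle t v (next_node v p i)) ->
     exists p, sent t v = Some p /\
       forall q i, queued loc t v q i -> link_up oracle t v (next_node v q i) ->
         inj q <= inj p).

End Radio.

(* Main.v *)
Require Import Defs.
From mathcomp Require Import all_boot.

Theorem lemma2 (V : finType) (adj : rel V) (P : eqType) (inj : P -> nat)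
    (pth : P -> seq V) (h : nat) (oracle : nat -> V -> bool)
    (loc : nat -> P -> option nat) (sent : nat -> V -> option P) :
  simple_graph adj ->
  valid_paths adj pth ->
  TO adj h oracle ->
  SIS_P_execution adj inj pth oracle loc sent ->
  forall (v : V) (p : P) (i ta : nat),
    (* p arrives at (is in the queue of) v at round ta *)
    queued pth loc ta v p i ->
    (* every h consecutive rounds t, ..., t+h-1 after the arrival during which
       p has not yet been transmitted from v (i.e. lying within the interval from
       the arrival of p at v until p is transmitted from v, if ever) *)
    forall t, ta <= t ->
    (forall s, ta <= s < t + h -> sent s v <> Some p) ->
      exists2 s, t <= s < t + h &
        exists q, [/\ sent s v = Some q, q != p & inj p <= inj q].
Proof.
move=> _ Hval HTO [_ [_ [Hmov [Hsent Hpol]]]] v p i ta [Hl Hsz Hnth] t Hta Hns.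
have Hinv : forall k, ta + k < t + h -> loc (ta + k) p = Some i.
  elim=> [|k IH] Hk; first by rewrite addn0.
  have Hk' : ta + k < t + h by rewrite addnS in Hk; exact: ltnW.
  rewrite addnS (Hmov _ _ _ (IH Hk')).
  case: existsP => // [[u /eqP Hu]].
  have [_ [i' [[Hl' Hsz' Hn'] _]]] := Hsent _ _ _ Hu.
  rewrite IH // in Hl'; case: Hl' => Ei; subst i'.
  have Euv : u = v.
    by rewrite -[LHS]Hn' (set_nth_default v u (ltnW Hsz')) Hnth.
  subst u; exfalso; apply: (Hns (ta + k)) => //.
  by rewrite Hk' leq_addr.
have Hadj : adj v (next_node pth v p i).
  have [x [s [Hp Hpath]]] := Hval p.
  move/(pathP x): Hpath => Hpath.
  rewrite /next_node.
  rewrite Hp in Hsz Hnth *.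
  have Hi : i < size s by [].
  have := Hpath i Hi.
  rewrite -{1}Hnth /= (set_nth_default x v (ltnW Hsz)) (set_nth_default x v Hi).
  done.
have [s Hs Hup] := HTO _ _ t Hadj.
have Hls : loc s p = Some i.
  have -> : s = ta + (s - ta) by rewrite subnKC // (leq_trans Hta) //; case/andP: Hs.
  apply: Hinv; rewrite subnKC; first by case/andP: Hs.
  by rewrite (leq_trans Hta) //; case/andP: Hs.
have Hor : oracle s v by case/and3P: Hup.
have [q [Hq Hmax]] := Hpol s v Hor (ex_intro _ p (ex_intro _ i (conj (And3 Hls Hsz Hnth) Hup))).
exists s => //; exists q; split => //.
- apply/eqP => E; subst q; apply: (Hns s) => //.
  by case/andP: Hs => H1 ->; rewrite (leq_trans Hta H1).
- exact: (Hmax p i (And3 Hls Hsz Hnth) Hup).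
Qed.
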